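(* Let $n\ge 2$, $\lambda>0$, let $M$ be one of the listed symmetric spaces with associated function $\mathcal D_M$, and let $0<r<r_{max}(M)$. Let $h_r$ be the (unique) solution on $[0,r)$, real-analytic as a function of $u^2$, of $$h_r''(u)\,(h_r'(u))^{n-1}=e^{\lambda h_r(u)}\mathcal D_M(u),\quad u\in[0,r),\qquad \lim_{u\to r}h_r(u)=\infty.$$ Then: (1) $h_r'(u)>0$ and $h_r''(u)>0$ for all $u\in(0,r)$, and $\inf_{[0,r)}h_r=h_r(0)$; (2) $h_r'(0)=0$; (3) $h_r'(t)=\big(\int_0^t n e^{\lambda h_r(u)}\mathcal D_M(u)\,du\big)^{1/n}$ for all $t\in(0,r)$; (4) $\lim_{u\to r}h_r'(u)=\infty$ and $\lim_{u\to r}h_r''(u)=\infty$.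
   Context: For a real-analytic Riemannian manifold $M$ of real dimension $n$, the Grauert tube $T^rM=\{(x,v)\in TM:|v|<r/2\}$ carries the adapted complex structure (defined for $r<r_{max}(M)$), $\rho(x,v)=4|v|^2$ and $u=\sqrt\rho$. The functions are: $\mathcal D(u)=u^{n-1}$ for $M=\mathbb R^n$ ($r_{max}=\infty$); $\mathcal D(u)=(\sin u)^{n-1}$ for real hyperbolic space $H^n$ ($r_{max}=\pi$); $\mathcal D(u)=(\sinh u)^{n-1}$ for the round sphere and real projective space; $\mathcal D(u)=2^{n-1}(\cosh\frac u2)^k(\sinh\frac u2)^{n-1}$ with $k=1,3,7$ for the complex projective space, quaternionic projective space, and Cayley plane respectively ($r_{max}=\infty$ for compact rank-one spaces). In all cases $\mathcal D_M\ge0$ with $\mathcal D_M(u)=0$ iff $u=0$, $\mathcal D_M^{1/(n-1)}(0)=0$ and $(\mathcal D_M^{1/(n-1)})'(0)=1$. The function $h_r(u)$ (as a function on $T^rM$ through $u=\sqrt\rho$) is a Kähler potential for the complete Kähler–Einstein metric of Ricci curvature $-\lambda$ on $T^rM$. *)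

(* Defs.v *)
From Stdlib Require Import Reals Lra.
Open Scope R_scope.

Inductive SymSpace : Type :=
  | Euclid
  | HyperbolicSp
  | RoundSphere
  | RealProj
  | ComplexProj     (* CP^(n/2) *)
  | QuatProj        (* HP^(n/4) *)
  | CayleyPlane.    (* OP^2, n = 16 *)

Definition valid_dim (M : SymSpace) (n : nat) : Prop :=
  match M with
  | ComplexProj => Nat.even n = true
  | QuatProj => Nat.modulo n 4 = 0%nat
  | CayleyPlane => n = 16%nat
  | _ => True
  end.

Definition DM (M : SymSpace) (n : nat) (u : R) : R :=
  match M with
  | Euclid => u ^ (n - 1)
  | HyperbolicSp => (sin u) ^ (n - 1)
  | RoundSphere | RealProj => (sinh u) ^ (n - 1)
  | ComplexProj => 2 ^ (n - 1) * (cosh (u / 2)) ^ 1 * (sinh (u / 2)) ^ (n - 1)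
  | QuatProj => 2 ^ (n - 1) * (cosh (u / 2)) ^ 3 * (sinh (u / 2)) ^ (n - 1)
  | CayleyPlane => 2 ^ (n - 1) * (cosh (u / 2)) ^ 7 * (sinh (u / 2)) ^ (n - 1)
  end.

Definition below_rmax (M : SymSpace) (r : R) : Prop :=
  match M with
  | HyperbolicSp => r < PI
  | _ => True
  end.

Definition real_analytic_on_0b (g : R -> R) (b : R) : Prop :=
  forall x0, 0 <= x0 < b ->
    exists delta, 0 < delta /\
      exists an : nat -> R,
        forall x, Rabs (x - x0) < delta -> Pser an (x - x0) (g x).

Definition tends_to_infty_left (f : R -> R) (r : R) : Prop :=
  forall K, exists delta, 0 < delta /\
    forall u, r - delta < u < r -> K < f u.

Definition is_glb (E : R -> Prop) (m : R) : Prop :=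
  (forall y, E y -> m <= y) /\
  (forall b, (forall y, E y -> b <= y) -> b <= m).

(* Main.v *)
Require Import Defs.
From Stdlib Require Import Reals Lra Lia Psatz Classical Ranalysis5.
Open Scope R_scope.

Lemma pow_cont : forall f x k, continuity_pt f x -> continuity_pt (fun u => f u ^ k) x.
Proof.
  intros f x k Hf; induction k as [|k IH]; simpl.
  - apply (continuity_pt_const (fun _ => 1)). intros a b; reflexivity.
  - change (continuity_pt (mult_fct f (fun u => f u ^ k)) x).
    apply continuity_pt_mult; assumption.
Qed.

Lemma half_cont : forall x, continuity_pt (fun u => u / 2) x.
Proof.
  intro x. change (continuity_pt (mult_fct id (fct_cte (/2))) x).
  apply continuity_pt_mult; [apply derivable_continuous_pt, derivable_pt_id
   | apply continuity_pt_const; intros a b; reflexivity].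
Qed.

Lemma cosh_half_cont : forall x, continuity_pt (fun u => cosh (u/2)) x.
Proof.
  intro x. change (continuity_pt (comp cosh (fun u => u/2)) x).
  apply continuity_pt_comp; [apply half_cont | apply derivable_continuous_pt, derivable_pt_cosh].
Qed.

Lemma sinh_half_cont : forall x, continuity_pt (fun u => sinh (u/2)) x.
Proof.
  intro x. change (continuity_pt (comp sinh (fun u => u/2)) x).
  apply continuity_pt_comp; [apply half_cont | apply derivable_continuous_pt, derivable_pt_sinh].
Qed.

Lemma DM_cont : forall M n x, continuity_pt (DM M n) x.
Proof.
  intros M n x; destruct M; unfold DM.
  - apply (pow_cont (fun u => u)). apply derivable_continuous_pt, derivable_pt_id.
  - apply (pow_cont sin). apply continuity_sin.
  - apply (pow_cont sinh). apply derivable_continuous_pt, derivable_pt_sinh.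
  - apply (pow_cont sinh). apply derivable_continuous_pt, derivable_pt_sinh.
  - change (continuity_pt (mult_fct (mult_fct (fct_cte (2^(n-1))) (fun u => cosh (u/2) ^ 1)) (fun u => sinh (u/2) ^ (n-1))) x).
    apply continuity_pt_mult; [apply continuity_pt_mult|].
    + apply continuity_pt_const; intros a b; reflexivity.
    + apply (pow_cont (fun u => cosh (u/2))), cosh_half_cont.
    + apply (pow_cont (fun u => sinh (u/2))), sinh_half_cont.
  - change (continuity_pt (mult_fct (mult_fct (fct_cte (2^(n-1))) (fun u => cosh (u/2) ^ 3)) (fun u => sinh (u/2) ^ (n-1))) x).
    apply continuity_pt_mult; [apply continuity_pt_mult|].
    + apply continuity_pt_const; intros a b; reflexivity.
    + apply (pow_cont (fun u => cosh (u/2))), cosh_half_cont.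
    + apply (pow_cont (fun u => sinh (u/2))), sinh_half_cont.
  - change (continuity_pt (mult_fct (mult_fct (fct_cte (2^(n-1))) (fun u => cosh (u/2) ^ 7)) (fun u => sinh (u/2) ^ (n-1))) x).
    apply continuity_pt_mult; [apply continuity_pt_mult|].
    + apply continuity_pt_const; intros a b; reflexivity.
    + apply (pow_cont (fun u => cosh (u/2))), cosh_half_cont.
    + apply (pow_cont (fun u => sinh (u/2))), sinh_half_cont.
Qed.

Lemma sinh_pos : forall x, 0 < x -> 0 < sinh x.
Proof. intros x Hx. rewrite <- sinh_0. apply sinh_lt; exact Hx. Qed.

Lemma cosh_pos' : forall x, 0 < cosh x.
Proof. intro x; unfold cosh. assert (H1 := exp_pos x); assert (H2 := exp_pos (-x)); lra. Qed.

Lemma DM_pos : forall M n u, 0 < u -> (M = HyperbolicSp -> u < PI) -> 0 < DM M n u.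
Proof.
  intros M n u Hu HP; destruct M; unfold DM.
  - apply pow_lt; lra.
  - apply pow_lt; apply sin_gt_0; auto.
  - apply pow_lt, sinh_pos; lra.
  - apply pow_lt, sinh_pos; lra.
  - apply Rmult_lt_0_compat; [apply Rmult_lt_0_compat|];
      [apply pow_lt; lra | apply pow_lt, cosh_pos' | apply pow_lt, sinh_pos; lra].
  - apply Rmult_lt_0_compat; [apply Rmult_lt_0_compat|];
      [apply pow_lt; lra | apply pow_lt, cosh_pos' | apply pow_lt, sinh_pos; lra].
  - apply Rmult_lt_0_compat; [apply Rmult_lt_0_compat|];
      [apply pow_lt; lra | apply pow_lt, cosh_pos' | apply pow_lt, sinh_pos; lra].
Qed.

Lemma even_deriv0 : forall (h : R -> R) r l, 0 < r ->
  (forall u, Rabs u < r -> h (-u) = h u) -> derivable_pt_lim h 0 l -> l = 0.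
Proof.
  intros h r l Hr He Hd.
  destruct (Req_dec l 0) as [E|E]; [exact E|exfalso].
  assert (Hl : 0 < Rabs l / 2) by (assert (0 < Rabs l) by (apply Rabs_pos_lt; auto); lra).
  destruct (Hd _ Hl) as [d Hdd].
  assert (0 < Rmin d r) by (apply Rmin_pos; [apply cond_pos|auto]).
  assert (Rmin d r <= d) by apply Rmin_l.
  assert (Rmin d r <= r) by apply Rmin_r.
  remember (Rmin d r / 2) as e.
  assert (He0 : 0 < e) by lra.
  assert (Hed : e < d) by lra.
  assert (Her : e < r) by lra.
  assert (A1 := Hdd e ltac:(lra) ltac:(rewrite Rabs_right; lra)).
  assert (A2 := Hdd (-e) ltac:(lra) ltac:(rewrite Rabs_left; lra)).
  rewrite Rplus_0_l in A1, A2.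
  rewrite He in A2 by (rewrite Rabs_right; lra).
  replace ((h e - h 0) / - e) with (- ((h e - h 0) / e)) in A2 by (field; lra).
  set (q := (h e - h 0) / e) in *.
  revert A1 A2. unfold Rabs. repeat destruct Rcase_abs; lra.
Qed.

Lemma absr : forall u r, 0 <= u < r -> Rabs u < r.
Proof. intros u r H; rewrite Rabs_right; lra. Qed.

Theorem proposition2p1
  (n : nat) (lam : R) (M : SymSpace) (r : R)
  (h h1 h2 g : R -> R)
  (Hn : (2 <= n)%nat) (Hlam : 0 < lam) (HM : valid_dim M n)
  (Hr : 0 < r) (Hrmax : below_rmax M r)
  (* h is real-analytic as a function of u^2 *)
  (Hg : real_analytic_on_0b g (r ^ 2))
  (Hhg : forall u, Rabs u < r -> h u = g (u ^ 2))
  (* h1 = h', h2 = h'' *)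
  (Hh1 : forall u, Rabs u < r -> derivable_pt_lim h u (h1 u))
  (Hh2 : forall u, Rabs u < r -> derivable_pt_lim h1 u (h2 u))
  (* the ODE on [0,r) *)
  (Hode : forall u, 0 <= u < r ->
            h2 u * (h1 u) ^ (n - 1) = exp (lam * h u) * DM M n u)
  (* boundary blow-up *)
  (Hinf : tends_to_infty_left h r) :
  ((forall u, 0 < u < r -> 0 < h1 u /\ 0 < h2 u) /\
   is_glb (fun y => exists u, 0 <= u < r /\ y = h u) (h 0)) /\
  h1 0 = 0 /\
  (forall t, 0 < t < r ->
     exists pr : Riemann_integrable
                   (fun u => INR n * exp (lam * h u) * DM M n u) 0 t,
       h1 t = Rpower (RiemannInt pr) (/ INR n)) /\
  (tends_to_infty_left h1 r /\ tends_to_infty_left h2 r).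
Proof.
  assert (HDpos : forall u, 0 < u <= r -> 0 < DM M n u).
  { intros u Hu; apply DM_pos; [lra|]. intro E; subst M; simpl in Hrmax; lra. }
  assert (Hch : forall u, Rabs u < r -> continuity_pt h u).
  { intros u Hu; apply derivable_continuous_pt; exists (h1 u); apply Hh1; auto. }
  assert (Hch1 : forall u, Rabs u < r -> continuity_pt h1 u).
  { intros u Hu; apply derivable_continuous_pt; exists (h2 u); apply Hh2; auto. }
  assert (Hh10 : h1 0 = 0).
  { apply (even_deriv0 h r (h1 0) Hr).
    - intros u Hu. rewrite !Hhg; [f_equal; ring | auto | rewrite Rabs_Ropp; auto].
    - apply Hh1; rewrite Rabs_R0; lra. }
  assert (Hn1 : (n - 1 > 0)%nat) by lia.
  assert (Hnz : forall u, 0 < u < r -> h1 u <> 0).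
  { intros u Hu E. assert (H := Hode u ltac:(lra)). rewrite E, pow_i in H by lia.
    assert (0 < exp (lam * h u) * DM M n u).
    { apply Rmult_lt_0_compat; [apply exp_pos | apply HDpos; lra]. }
    lra. }
  assert (Hp1 : forall u, 0 < u < r -> 0 < h1 u).
  { intros a Ha. destruct (Rtotal_order (h1 a) 0) as [Hneg|[E|Hps]];
      [exfalso| exfalso; exact (Hnz a Ha E) | exact Hps].
    destruct (Hinf (h a)) as [d [Hd Hdd]].
    set (u := r - Rmin d (r - a) / 2).
    assert (0 < Rmin d (r - a)) by (apply Rmin_pos; lra).
    assert (Rmin d (r - a) <= d) by apply Rmin_l.
    assert (Rmin d (r - a) <= r - a) by apply Rmin_r.
    assert (Hu : a < u < r) by (unfold u; lra).
    assert (Hhu := Hdd u ltac:(unfold u; lra)).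
    destruct (MVT_cor2 h h1 a u ltac:(lra)) as [c [Hc1 Hc2]].
    { intros c Hc; apply Hh1, absr; lra. }
    assert (Hc : 0 < h1 c).
    { destruct (Rle_lt_dec (h1 c) 0) as [Hle|Hlt]; [|exact Hlt].
      assert (h1 c * (u - a) <= 0) by nra. lra. }
    destruct (IVT_interv h1 a c) as [z [Hz1 Hz2]]; try lra.
    { intros x Hx; apply Hch1, absr; lra. }
    apply (Hnz z); [lra | exact Hz2]. }
  assert (Hp2 : forall u, 0 < u < r -> 0 < h2 u).
  { intros u Hu. assert (H := Hode u ltac:(lra)).
    assert (0 < exp (lam * h u) * DM M n u).
    { apply Rmult_lt_0_compat; [apply exp_pos | apply HDpos; lra]. }
    assert (0 < h1 u ^ (n - 1)) by (apply pow_lt, Hp1; auto).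
    destruct (Rle_lt_dec (h2 u) 0) as [Hle|Hlt]; [|exact Hlt].
    assert (h2 u * h1 u ^ (n - 1) <= 0) by nra. lra. }
  assert (Hinc : forall a b, 0 <= a < b -> b < r -> h a < h b).
  { intros a b Hab Hb.
    destruct (MVT_cor2 h h1 a b ltac:(lra)) as [c [Hc1 Hc2]].
    { intros c Hc; apply Hh1, absr; lra. }
    assert (0 < h1 c) by (apply Hp1; lra).
    assert (0 < h1 c * (b - a)) by (apply Rmult_lt_0_compat; lra). lra. }
  assert (Hinc1 : forall a b, 0 <= a < b -> b < r -> h1 a < h1 b).
  { intros a b Hab Hb.
    destruct (MVT_cor2 h1 h2 a b ltac:(lra)) as [c [Hc1 Hc2]].
    { intros c Hc; apply Hh2, absr; lra. }
    assert (0 < h2 c) by (apply Hp2; lra).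
    assert (0 < h2 c * (b - a)) by (apply Rmult_lt_0_compat; lra). lra. }
  assert (Hinf1 : tends_to_infty_left h1 r).
  { intro K.
    destruct (classic (exists u0, 0 < u0 < r /\ K < h1 u0)) as [[u0 [Hu0 Hk]]|Hno].
    - exists (r - u0); split; [lra|]. intros u Hu.
      assert (h1 u0 < h1 u) by (apply Hinc1; lra). lra.
    - exfalso.
      assert (Hb : forall u, 0 < u < r -> h1 u <= K).
      { intros u Hu. apply Rnot_lt_le. intro Hl; apply Hno; exists u; auto. }
      destruct (Hinf (h 0 + Rabs K * r)) as [d [Hd Hdd]].
      set (u := r - Rmin d r / 2).
      assert (0 < Rmin d r) by (apply Rmin_pos; lra).
      assert (Rmin d r <= d) by apply Rmin_l.
      assert (Rmin d r <= r) by apply Rmin_r.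
      assert (Hu : 0 < u < r) by (unfold u; lra).
      assert (Hhu := Hdd u ltac:(unfold u; lra)).
      destruct (MVT_cor2 h h1 0 u ltac:(lra)) as [c [Hc1 Hc2]].
      { intros c Hc; apply Hh1, absr; lra. }
      assert (h1 c <= K) by (apply Hb; lra).
      assert (K <= Rabs K) by apply Rle_abs.
      assert (0 < h1 c) by (apply Hp1; lra).
      assert (h1 c * (u - 0) <= Rabs K * r) by
        (apply Rmult_le_compat; lra).
      lra. }
  split; [split|split; [exact Hh10|split]].
  - intros u Hu; split; auto.
  - split.
    + intros y [u [Hu ->]]. destruct (Req_dec u 0) as [->|E]; [lra|].
      left; apply Hinc; lra.
    + intros b Hb. apply Hb. exists 0; split; [lra|reflexivity].
  - intros t Ht.
    set (f := fun u => INR n * exp (lam * h u) * DM M n u).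
    assert (Hle : 0 <= t) by lra.
    assert (C0 : forall x, 0 <= x <= t -> continuity_pt f x).
    { intros x Hx. unfold f.
      change (continuity_pt (mult_fct (mult_fct (fct_cte (INR n)) (comp exp (fun u => lam * h u))) (DM M n)) x).
      apply continuity_pt_mult; [apply continuity_pt_mult|].
      + apply continuity_pt_const; intros a b; reflexivity.
      + apply continuity_pt_comp.
        * change (continuity_pt (mult_real_fct lam h) x). apply continuity_pt_scal, Hch, absr; lra.
        * apply derivable_continuous_pt, derivable_pt_exp.
      + apply DM_cont. }
    exists (FTC_P1 Hle C0 Hle (Rle_refl t)).
    assert (HA := RiemannInt_P29 Hle C0).
    assert (HF : antiderivative f (fun x => h1 x ^ n) 0 t).
    { split; [|exact Hle]. intros x Hx.
      assert (Hd : derivable_pt_lim (fun x => h1 x ^ n) x (INR n * h1 x ^ pred n * h2 x)).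
      { apply (derivable_pt_lim_comp h1 (fun y => y ^ n)); [apply Hh2, absr; lra | apply derivable_pt_lim_pow]. }
      exists (exist _ _ Hd). rewrite (derive_pt_eq_0 _ _ _ _ Hd). unfold f.
      rewrite Rmult_assoc, <- (Hode x ltac:(lra)). replace (pred n) with (n-1)%nat by lia. ring. }
    destruct (antiderivative_Ucte f _ _ 0 t HF HA) as [c Hc].
    assert (E0 := Hc 0 ltac:(lra)). assert (Et := Hc t ltac:(lra)).
    unfold primitive in E0, Et.
    destruct (Rle_dec 0 0) as [q1|]; [|lra]. destruct (Rle_dec 0 t) as [q2|]; [|lra].
    destruct (Rle_dec t t) as [q3|]; [|lra].
    rewrite RiemannInt_P9, Hh10, pow_i in E0 by lia.
    assert (Hc0 : c = 0) by lra. subst c.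
    rewrite Rplus_0_r in Et.
    rewrite (RiemannInt_P5 _ (FTC_P1 Hle C0 q2 q3)), <- Et.
    assert (Ht1 : 0 < h1 t) by (apply Hp1; lra).
    rewrite <- Rpower_pow by exact Ht1.
    rewrite Rpower_mult, Rinv_r, Rpower_1; [reflexivity|exact Ht1|].
    apply not_0_INR; lia.
  - split; [exact Hinf1|].
    set (t0 := r / 2).
    assert (Ht0 : 0 < t0 < r) by (unfold t0; lra).
    clearbody t0.
    destruct (continuity_ab_min (DM M n) t0 r ltac:(lra) (fun c _ => DM_cont M n c)) as [mx [Hmx1 Hmx2]].
    destruct (continuity_ab_maj (DM M n) t0 r ltac:(lra) (fun c _ => DM_cont M n c)) as [Mx [HMx1 HMx2]].
    assert (HcD0 : 0 < DM M n mx) by (apply HDpos; lra).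
    assert (HCD0 : 0 < DM M n Mx) by (apply HDpos; lra).
    set (cD := DM M n mx) in *. set (CD := DM M n Mx) in *.
    clearbody cD CD.
    assert (Ha1 : 0 < h1 t0) by (apply Hp1; lra).
    set (a1 := h1 t0) in *.
    set (A := a1 ^ n).
    set (B := INR n * CD / (lam * a1)).
    assert (HnR : 0 < INR n) by (apply lt_0_INR; lia).
    assert (HB : 0 < B) by (unfold B; apply Rdiv_lt_0_compat; nra).
    assert (HBl : B * lam * a1 = INR n * CD) by (unfold B; field; lra).
    clearbody B.
    assert (Hbound : forall t, t0 < t < r -> h1 t ^ n <= A + B * exp (lam * h t)).
    { intros t Ht.
      set (psi := fun x => A + B * exp (lam * h x) - h1 x ^ n).
      destruct (MVT_cor2 psi (fun x => B * (exp (lam * h x) * (lam * h1 x)) - INR n * h1 x ^ pred n * h2 x) t0 t ltac:(lra)) as [c [Hc1 Hc2]].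
      { intros x Hx. unfold psi.
        apply (derivable_pt_lim_minus (fun x => A + B * exp (lam * h x)) (fun x => h1 x ^ n)).
        - replace (B * (exp (lam * h x) * (lam * h1 x))) with (0 + B * (exp (lam * h x) * (lam * h1 x))) by ring.
          apply (derivable_pt_lim_plus (fun _ => A) (fun x => B * exp (lam * h x))); [apply derivable_pt_lim_const|].
          apply (derivable_pt_lim_scal (fun x => exp (lam * h x))).
          apply (derivable_pt_lim_comp (fun x => lam * h x) exp).
          + apply (derivable_pt_lim_scal h), Hh1, absr; lra.
          + apply derivable_pt_lim_exp.
        - apply (derivable_pt_lim_comp h1 (fun y => y ^ n)); [apply Hh2, absr; lra | apply derivable_pt_lim_pow]. }
      assert (Hpc : 0 <= B * (exp (lam * h c) * (lam * h1 c)) - INR n * h1 c ^ pred n * h2 c).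
      { replace (pred n) with (n-1)%nat by lia.
        replace (INR n * h1 c ^ (n - 1) * h2 c) with (INR n * (h2 c * h1 c ^ (n-1))) by ring.
        rewrite Hode by lra.
        assert (Dc : DM M n c <= CD) by (apply HMx1; lra).
        assert (H1c : a1 < h1 c) by (apply Hinc1; lra).
        assert (E := exp_pos (lam * h c)).
        assert (HBl0 : 0 < B * lam) by nra.
        assert (B * lam * a1 <= B * lam * h1 c) by (apply Rmult_le_compat_l; lra).
        assert (HH : 0 <= B * lam * h1 c - INR n * DM M n c) by nra.
        assert (0 <= exp (lam * h c) * (B * lam * h1 c - INR n * DM M n c)) by (apply Rmult_le_pos; lra).
        nra. }
      assert (0 <= (B * (exp (lam * h c) * (lam * h1 c)) - INR n * h1 c ^ pred n * h2 c) * (t - t0))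
        by (apply Rmult_le_pos; lra).
      unfold psi in Hc1.
      assert (HA1 : h1 t0 ^ n = A) by reflexivity.
      assert (0 < B * exp (lam * h t0)) by (apply Rmult_lt_0_compat; [lra|apply exp_pos]).
      lra. }
    intro K.
    destruct (Hinf1 (2 * B * K / cD)) as [d1 [Hd1 Hdd1]].
    destruct (Hinf (A / (B * lam))) as [d2 [Hd2 Hdd2]].
    exists (Rmin (Rmin d1 d2) (r - t0)). split.
    { apply Rmin_pos; [apply Rmin_pos|]; lra. }
    intros u Hu.
    assert (Rmin (Rmin d1 d2) (r - t0) <= Rmin d1 d2) by apply Rmin_l.
    assert (Rmin (Rmin d1 d2) (r - t0) <= r - t0) by apply Rmin_r.
    assert (Rmin d1 d2 <= d1) by apply Rmin_l.
    assert (Rmin d1 d2 <= d2) by apply Rmin_r.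
    assert (Hu1 := Hdd1 u ltac:(lra)).
    assert (Hu2 := Hdd2 u ltac:(lra)).
    assert (Hbu := Hbound u ltac:(lra)).
    assert (HODE := Hode u ltac:(lra)).
    assert (Du : cD <= DM M n u) by (apply Hmx1; lra).
    assert (Hy : 0 < h1 u) by (apply Hp1; lra).
    assert (Hz : 0 < h2 u) by (apply Hp2; lra).
    assert (HP : 0 < h1 u ^ (n - 1)) by (apply pow_lt; lra).
    assert (Hpow : h1 u ^ n = h1 u * h1 u ^ (n-1)) by (replace n with (S (n-1)) at 1 by lia; reflexivity).
    assert (HX0 := exp_pos (lam * h u)).
    assert (HXi := exp_ineq1_le (lam * h u)).
    set (X := exp (lam * h u)) in *.
    set (P := h1 u ^ (n - 1)) in *.
    assert (HBl0 : 0 < B * lam) by nra.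
    assert (HAl : A < B * lam * h u).
    { replace A with (B * lam * (A / (B * lam))) by (field; lra).
      apply Rmult_lt_compat_l; lra. }
    assert (HX : A < B * X) by nra.
    assert (S1 : h2 u * (h1 u * P) < h2 u * (2 * B * X)) by (apply Rmult_lt_compat_l; lra).
    assert (S2 : h2 u * (h1 u * P) = h1 u * (X * DM M n u)) by (rewrite <- HODE; ring).
    assert (S3 : h1 u * (X * cD) <= h1 u * (X * DM M n u))
      by (apply Rmult_le_compat_l; [lra| apply Rmult_le_compat_l; lra]).
    assert (S4 : cD * h1 u < 2 * B * h2 u).
    { apply Rmult_lt_reg_l with X; [lra|].
      replace (X * (cD * h1 u)) with (h1 u * (X * cD)) by ring.
      replace (X * (2 * B * h2 u)) with (h2 u * (2 * B * X)) by ring. lra. }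
    assert (S5 : 2 * B * K < cD * h1 u).
    { replace (2 * B * K) with (cD * (2 * B * K / cD)) by (field; lra).
      apply Rmult_lt_compat_l; lra. }
    apply Rmult_lt_reg_l with (2 * B); lra.
Qed.
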